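(* Let $h$ be a super solution. Then for every $R>0$, $\theta\in(0,1)$ and all $\tau\ge\tau_0\ge0$, $$\int_{[0,R]}h(\tau,x)dx\ge(1-\theta)\int_{[0,\theta R]}h(\tau_0,x)dx.$$
   Context: $\mathscr M_+([0,\infty))$ is the set of nonnegative finite Radon measures on $[0,\infty)$; we write $\int_A\varphi(x)h(x)dx$ for $\int_A\varphi\,dh$. $C^1_b([0,\infty))$ denotes bounded $C^1$ functions with bounded derivative. For continuous $\varphi$: $\Lambda(\varphi)(x,y)=\varphi(x+y)+\varphi(|x-y|)-2\varphi(\max\{x,y\})$ and $\mathscr Q_3^{(2)}(\varphi,h)=\iint_{(0,\infty)^2}\frac{\Lambda(\varphi)(x,y)}{\sqrt{xy}}h(x)h(y)dxdy$ (which is $\ge0$, possibly $+\infty$, for convex $\varphi$). Super solution: a map $h:[0,\infty)\to\mathscr M_+([0,\infty))$ such that for every nonnegative, convex, nonincreasing $\varphi\in C^1_b([0,\infty))$, the map $\tau\mapsto\int\varphi(x)h(\tau,x)dx$ is locally absolutely continuous on $[0,\infty)$ and $\frac{d}{d\tau}\int\varphi(x)h(\tau,x)dx\ge\mathscr Q_3^{(2)}(\varphi,h(\tau))$ for a.e. $\tau>0$. *)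

(* Defs.v *)
From HB Require Import structures.
From mathcomp Require Import all_boot all_order all_algebra.
From mathcomp Require Import all_classical all_reals all_analysis.
Set Implicit Arguments. Unset Strict Implicit. Unset Printing Implicit Defensive.
Import Order.TTheory GRing.Theory Num.Theory.
Import numFieldNormedType.Exports.
Local Open Scope classical_set_scope.
Local Open Scope ring_scope.

(* An element of M_+([0,oo)): a finite (hence Radon) Borel measure on R that
   gives no mass to (-oo,0). *)
Definition supported_on_nonneg (R : realType)
    (mu : {finite_measure set R -> \bar R}) : Prop :=
  mu [set` `]-oo, 0[] = 0%E.

Definition Lam (R : realType) (phi : R -> R) (x y : R) : R :=
  phi (x + y) + phi `|x - y| - 2 * phi (Num.max x y).

Definition Q32 (R : realType) (phi : R -> R)
    (mu : {finite_measure set R -> \bar R}) : \bar R :=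
  (\int[(mu \x mu)%E]_(z in [set z : R * R | 0 < z.1 /\ 0 < z.2]%R)
     ((Lam phi z.1 z.2) / Num.sqrt (z.1 * z.2))%:E)%E.

Definition C1b_nonneg (R : realType) (phi : R -> R) : Prop :=
  (exists M : R, forall x, 0 <= x -> `|phi x| <= M) /\
  {within `[0, +oo[, continuous phi} /\
  exists dphi : R -> R,
    {within `[0, +oo[, continuous dphi} /\
    (exists M : R, forall x, 0 <= x -> `|dphi x| <= M) /\
    (forall x : R, 0 < x -> is_derive x (1 : R) phi (dphi x)).

Definition convex_nonneg (R : realType) (phi : R -> R) : Prop :=
  forall x y t : R, 0 <= x -> 0 <= y -> 0 <= t <= 1 ->
    phi (t * x + (1 - t) * y) <= t * phi x + (1 - t) * phi y.

Definition nonincreasing_nonneg (R : realType) (phi : R -> R) : Prop :=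
  forall x y : R, 0 <= x -> x <= y -> phi y <= phi x.

Definition test_fun (R : realType) (phi : R -> R) : Prop :=
  (forall x, 0 <= x -> 0 <= phi x) /\ convex_nonneg phi /\
  nonincreasing_nonneg phi /\ C1b_nonneg phi.

Definition abs_cont_on (R : realType) (f : R -> R) (a b : R) : Prop :=
  forall e : R, 0 < e -> exists2 d : R, 0 < d &
    forall (n : nat) (x y : 'I_n -> R),
      (forall i, a <= x i /\ x i <= y i /\ y i <= b) ->
      (forall i j, i != j -> y i <= x j \/ y j <= x i) ->
      \sum_(i < n) (y i - x i) < d ->
      \sum_(i < n) `|f (y i) - f (x i)| < e.

Definition loc_abs_cont_nonneg (R : realType) (f : R -> R) : Prop :=
  forall b : R, 0 <= b -> abs_cont_on f 0 b.

Definition moment (R : realType) (h : R -> {finite_measure set R -> \bar R})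
    (phi : R -> R) (tau : R) : R :=
  fine (\int[h tau]_(x in [set` `[0%R, +oo[%R]) (phi x)%:E)%E.

Definition super_solution (R : realType)
    (h : R -> {finite_measure set R -> \bar R}) : Prop :=
  (forall tau, 0 <= tau -> supported_on_nonneg (h tau)) /\
  forall phi : R -> R, test_fun phi ->
    loc_abs_cont_nonneg (moment h phi) /\
    {ae (@lebesgue_measure R), forall tau : R, 0 < tau ->
       derivable (moment h phi) tau (1 : R) /\
       (Q32 phi (h tau) <= (derive1 (moment h phi) tau)%:E)%E}.

(* Main.v *)
Require Import Defs.
From HB Require Import structures.
From mathcomp Require Import all_boot all_order all_algebra.
From mathcomp Require Import all_classical all_reals all_analysis.
From mathcomp Require Import ring lra measurable_realfun.
Import Order.TTheory GRing.Theory Num.Theory.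
Import numFieldNormedType.Exports.
Local Open Scope classical_set_scope.
Local Open Scope ring_scope.
Section S1.
Variable R : realType.
Lemma good_quot (f : R -> R) x eps : derivable f x 1 -> 0 <= derive1 f x -> 0 < eps ->
  exists2 r, 0 < r & forall t, `|t - x| < r -> t != x -> - eps <= (f t - f x) / (t - x).
Proof.
move=> df d0 e0.
move/cvgr_dist_lt: df => /(_ _ e0).
rewrite derive1E /derive in d0.
move=> [r /= r0 H]; exists r => // t tx ntx.
have := H (t - x); rewrite /= sub0r normrN => /(_ tx); rewrite subr_eq0 => /(_ ntx).
rewrite /= /shift /= [_%:A]mulr1 subrK [_ *: _]mulrC.
move: d0; set L := lim _ => d0.
rewrite ltr_norml => /andP[_ H2]; lra.
Qed.
Lemma real_ind (a b : R) (P : R -> Prop) : a <= b -> P a ->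
  (forall x, a <= x -> x <= b -> exists2 r, 0 < r & forall y z, a <= y -> y <= x -> x <= z -> z <= b ->
     x - r < y -> z < x + r -> P y -> P z) -> P b.
Proof.
move=> ab Pa step.
pose A := [set x | a <= x <= b /\ forall t, a <= t <= x -> P t].
have Aa : A a.
  split; first by rewrite lexx ab.
  by move=> t /andP[h1 h2]; have -> : t = a by apply/eqP; rewrite eq_le h1 h2.
have ubA : ubound A b by move=> x [/andP[_ ->]].
have hs : has_sup A by split; [exists a | exists b].
set c := sup A.
have ac : a <= c by apply: sup_upper_bound.
have cb : c <= b by apply: sup_le_ub => //; exists a.
have [r r0 H] := step c ac cb.
have [x0 Ax0 x0c] := sup_adherent r0 hs. rewrite -/c in x0c.
have x0lec : x0 <= c by apply: sup_upper_bound.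
case: Ax0 => /andP[ax0 _] Px0.
have Pall : forall t, a <= t -> t <= b -> t < c + r -> P t.
  move=> t at_ tb tcr.
  case: (leP c t) => ct.
    apply: (H x0) => //. by apply: Px0; rewrite lexx ax0.
  have ct0 : 0 < c - t by rewrite subr_gt0.
  have [e Ae et] := sup_adherent ct0 hs.
  case: Ae => _ Pe; apply: Pe; rewrite at_ /=.
  rewrite /c in et; lra.
case: (ltP b (c + r)) => bcr; first exact: Pall.
have : A (c + r / 2).
  split; first by apply/andP; split; lra.
  move=> t /andP[h1 h2]; apply: Pall => //; lra.
move=> /sup_upper_bound => /(_ hs); rewrite -/c; lra.
Qed.
Local Notation mu := (@lebesgue_measure R).
Lemma ac_mono_aux (f : R -> R) (N : set R) :
  loc_abs_cont_nonneg f -> measurable N -> mu N = 0%E ->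
  (forall x, 0 < x -> ~ N x -> derivable f x 1 /\ 0 <= derive1 f x) ->
  forall a b e, 0 <= a -> a <= b -> 0 < e -> f a - e * (b - a + 1) <= f b.
Proof.
move=> ac mN N0 good a b e a0 ab e0.
have [d d0 acd] := ac b (le_trans a0 ab) e e0.
pose N' := N `|` [set 0].
have mN' : measurable N' by apply: measurableU => //; exact: measurable_set1.
have N'0 : mu N' = 0%E.
  apply/eqP; rewrite eq_le measure_ge0 andbT.
  by rewrite (le_trans (measureU2 _ _ _)) //= ?N0 ?lebesgue_measure_set1 ?adde0 //; exact: measurable_set1.
have [U [oU N'U UD]] : exists U : set R, [/\ open U, N' `<=` U & (mu (U `\` N') < d%:E)%E].
  apply: lebesgue_regularity_outer => //; rewrite [X in (X < _)%E](_ : _ = 0%E) ?ltry //; exact: N'0.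
have mU : measurable U by exact: open_measurable.
have Ud : (mu U < d%:E)%E.
  have h1 : (mu U <= mu ((U `\` N') `|` N'))%E.
    apply: le_measure; rewrite ?inE //; first by apply: measurableU => //; exact: measurableD.
    by move=> x Ux; case: (pselect (N' x)) => ?; [right|left].
  apply: (le_lt_trans h1); apply: (le_lt_trans (measureU2 _ _ _)) => //; first exact: measurableD.
  by rewrite [X in (_ + X)%E](_ : _ = 0%E) ?adde0 //; exact: N'0.
pose P z := exists n (X Y : nat -> R),
  [/\ (forall i, (i < n)%N -> a <= X i /\ X i <= Y i /\ Y i <= z),
   (forall i j, (i < n)%N -> (j < n)%N -> i != j -> Y i <= X j \/ Y j <= X i),
   ((\sum_(i < n) (Y i - X i))%:E <= mu (U `&` `]-oo, z]))%E &
   f a - e * (z - a) - \sum_(i < n) `|f (Y i) - f (X i)| <= f z].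
have Pb : P b.
  apply: (@real_ind a b P) => //.
    exists 0%N, (fun _ => 0), (fun _ => 0); split => //.
    - by rewrite big_ord0 measure_ge0.
    - rewrite big_ord0; lra.
  move=> x ax xb.
  case: (pselect (U x)) => Ux.
    have := oU x Ux; move=> /nbhs_ballP [r /= r0 Hr].
    exists r => // y z ay yx xz zb yr zr [n [X [Y [h1 h2 h3 h4]]]].
    have yzU : `]y, z] `<=` U.
      move=> t /=; rewrite in_itv /= => /andP[t1 t2]; apply: Hr.
      rewrite /ball /= ltr_norml; apply/andP; split; lra.
    exists n.+1, (fun i => if i == n then y else X i), (fun i => if i == n then z else Y i); split.
    - move=> i; rewrite ltnS leq_eqVlt => /orP[/eqP->|ilt]; first by rewrite eqxx; lra.
      by rewrite (ltn_eqF ilt); have := h1 i ilt; lra.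
    - move=> i j; rewrite ltnS leq_eqVlt => /orP[/eqP->|ilt]; rewrite ltnS leq_eqVlt => /orP[/eqP->|jlt]; rewrite ?eqxx //.
      + by rewrite (ltn_eqF jlt) => _; right; have := h1 j jlt; lra.
      + by rewrite (ltn_eqF ilt) => _; left; have := h1 i ilt; lra.
      + by rewrite (ltn_eqF ilt) (ltn_eqF jlt); exact: h2.
    - rewrite big_ord_recr /= eqxx.
      rewrite (eq_bigr (fun i : 'I_n => Y i - X i)); last by move=> i _; rewrite /= (ltn_eqF (ltn_ord i)).
      have hyz : ((z - y)%:E <= mu `]y, z])%E.
        rewrite lebesgue_measure_itv /= lte_fin; case: ltgtP => //= zy; first by rewrite lee_fin; lra.
        by rewrite zy subrr.
      rewrite EFinD; apply: (le_trans (leeD h3 hyz)).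
      rewrite -measureU //; last first.
      + rewrite -subset0 => t [[_ /=]]; rewrite !in_itv /= => ty /andP[yt _].
        by move: (lt_le_trans yt ty); rewrite ltxx.
      + by apply: measurableI => //; exact: measurable_itv.
      apply: le_measure; rewrite ?inE //.
      + apply: measurableU; [apply: measurableI => //|]; exact: measurable_itv.
      + by apply: measurableI => //; exact: measurable_itv.
      move=> t [[Ut ty]|tyz].
        split => //; move: ty; rewrite /= !in_itv /= => ty; exact: (le_trans ty xz) || lra.
      split; first exact: yzU.
      by move: tyz; rewrite /= !in_itv /= => /andP[? ?].
    - rewrite big_ord_recr /= eqxx.
      rewrite (eq_bigr (fun i : 'I_n => `|f (Y i) - f (X i)|)); last by move=> i _; rewrite /= (ltn_eqF (ltn_ord i)).
      have habs : f y - f z <= `|f z - f y| by rewrite distrC ler_norm.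
      have : 0 <= e * (z - y) by apply: mulr_ge0; lra.
      lra.
  have nN'x : ~ N' x by move=> /N'U.
  have x0 : 0 < x.
    rewrite lt_neqAle (le_trans a0 ax) andbT; apply/eqP => x0; apply: nN'x; right.
    by rewrite x0.
  have [dx dx0] := good x x0 (fun Nx => nN'x (or_introl Nx)).
  have [r r0 Hr] := @good_quot f x e dx dx0 e0.
  exists r => // y z ay yx xz zb yr zr [n [X [Y [h1 h2 h3 h4]]]].
  exists n, X, Y; split => //.
  - by move=> i ilt; have := h1 i ilt; lra.
  - apply: (le_trans h3); apply: le_measure; rewrite ?inE //.
    + by apply: measurableI => //; exact: measurable_itv.
    + by apply: measurableI => //; exact: measurable_itv.
    by move=> t [Ut]; rewrite /= !in_itv /= => ?; split => //; lra.
  have fz : - e * (z - x) <= f z - f x.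
    have [->|zx] := eqVneq z x; first by rewrite !subrr mulr0.
    have hzr : `|z - x| < r by rewrite ger0_norm ?subr_ge0 //; lra.
    have := Hr z hzr zx.
    have hq : f z - f x = (f z - f x) / (z - x) * (z - x) by rewrite divfK // subr_eq0.
    move: hq; set q := (f z - f x) / (z - x) => hq hq2.
    have : 0 <= z - x by lra.
    nra.
  have fy : - e * (x - y) <= f x - f y.
    have [->|yx'] := eqVneq y x; first by rewrite !subrr mulr0.
    have hyr : `|y - x| < r by rewrite ler0_norm ?subr_le0 //; lra.
    have := Hr y hyr yx'.
    have hq : f y - f x = (f y - f x) / (y - x) * (y - x) by rewrite divfK // subr_eq0.
    move: hq; set q := (f y - f x) / (y - x) => hq hq2.
    have : y - x <= 0 by lra.
    nra.
  lra.
case: Pb => n [X [Y [h1 h2 h3 h4]]].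
have Sd : \sum_(i < n) (Y i - X i) < d.
  rewrite -lte_fin; apply: (le_lt_trans h3); apply: (le_lt_trans _ Ud).
  apply: le_measure; rewrite ?inE //.
  by apply: measurableI => //; exact: measurable_itv.
have Sv : \sum_(i < n) `|f (Y i) - f (X i)| < e.
  apply: (acd n (fun i => X i) (fun i => Y i)) => //.
  - move=> i; have [? [? ?]] := h1 i (ltn_ord i); split; [lra|split; lra].
  - by move=> i j ij; apply: h2.
rewrite mulrDr mulr1; lra.
Qed.
End S1.
Section S2.
Variable R : realType.
Lemma is_derive_sqrt_comp (g : R -> R) (x dg : R) : is_derive x (1:R) g dg -> 0 < g x ->
  is_derive x (1:R) (fun y => Num.sqrt (g y)) (dg / (2 * Num.sqrt (g x))).
Proof.
move=> hg gx; have hs := is_derive1_sqrt gx.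
have dg1 : derivable g x 1 by exact: ex_derive.
have ds : derivable Num.sqrt (g x) 1 by exact: ex_derive.
apply: DeriveDef.
  apply/derivable1_diffP; apply: (@differentiable_comp _ _ _ _ g Num.sqrt);
  by apply/derivable1_diffP.
rewrite -derive1E (derive1_comp dg1 ds) !derive1E !derive_val.
by rewrite mulrC.
Qed.

Definition tf (Rr d x : R) := Rr - x + Num.sqrt ((Rr - x) ^+ 2 + d ^+ 2).
Definition dtf (Rr d x : R) := - 1 - (Rr - x) / Num.sqrt ((Rr - x) ^+ 2 + d ^+ 2).

Lemma tf_derive (Rr d x : R) : 0 < d -> is_derive x (1:R) (tf Rr d) (dtf Rr d x).
Proof.
move=> d0.
have hg : is_derive x (1:R) (fun y => (Rr - y) ^+ 2 + d ^+ 2) (- (2 * (Rr - x))).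
  have hl : is_derive x (1:R) (cst Rr - id) (0 - 1) by apply: is_deriveB.
  have h2 := @is_deriveX _ _ (cst Rr - id) 2 x 1 _ hl.
  have h3 := @is_deriveD _ _ _ ((cst Rr - id) ^+ 2) (cst (d ^+ 2)) x 1 _ _ h2 (is_derive_cst _ _ _).
  move: h3 => /is_derive_eq h3; apply: h3.
  by rewrite /= addr0 expr1 sub0r [_ *: _]mulrN1.
have gx : 0 < (Rr - x) ^+ 2 + d ^+ 2 by apply: ltr_wpDl; [exact: sqr_ge0 | exact: exprn_gt0].
have hs := @is_derive_sqrt_comp _ _ _ hg gx.
have hl : is_derive x (1:R) (cst Rr - id) (0 - 1) by apply: is_deriveB.
have h := @is_deriveD _ _ _ (cst Rr - id) (fun y => Num.sqrt ((Rr - y) ^+ 2 + d ^+ 2)) x 1 _ _ hl hs.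
move: h => /is_derive_eq h; apply: h.
have sg : 0 < Num.sqrt ((Rr - x) ^+ 2 + d ^+ 2) by rewrite sqrtr_gt0.
rewrite /dtf sub0r; field; exact: lt0r_neq0.
Qed.

Lemma sqf (u : R) : 0 <= u -> 0 <= Num.sqrt u /\ Num.sqrt u ^+ 2 = u.
Proof. by move=> u0; split; [exact: sqrtr_ge0 | exact: sqr_sqrtr]. Qed.

Lemma Sge (s d : R) : `|s| <= Num.sqrt (s ^+ 2 + d ^+ 2).
Proof. by rewrite -sqrtr_sqr ler_sqrt ?lerDl ?sqr_ge0 // addr_ge0 // sqr_ge0. Qed.

Lemma Sle (s d : R) : 0 <= d -> Num.sqrt (s ^+ 2 + d ^+ 2) <= `|s| + d.
Proof.
move=> d0; rewrite -[X in _ <= X]ger0_norm ?addr_ge0 // -sqrtr_sqr ler_sqrt ?sqr_ge0 //.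
rewrite sqrrD (real_normK (num_real s)).
have : 0 <= `|s| * d by rewrite mulr_ge0.
lra.
Qed.

Lemma tf_ge0 (Rr d x : R) : 0 <= tf Rr d x.
Proof. rewrite /tf; have := Sge (Rr - x) d; have := ler_norm (- (Rr - x)); rewrite normrN; lra. Qed.

Lemma tf_ge2 (Rr d x : R) : 2 * (Rr - x) <= tf Rr d x.
Proof. rewrite /tf; have := Sge (Rr - x) d; have := ler_norm (Rr - x); lra. Qed.

Lemma tf_le (Rr d x : R) : 0 <= d -> tf Rr d x <= (Rr - x) + `|Rr - x| + d.
Proof. by move=> d0; rewrite /tf; have := @Sle (Rr - x) d d0; lra. Qed.

Lemma tf_mono (Rr d x y : R) : x <= y -> tf Rr d y <= tf Rr d x.
Proof.
move=> xy; rewrite /tf.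
set s := Rr - x; set s' := Rr - y.
have ss : s' <= s by rewrite /s /s'; lra.
have [A0 A2] := sqf (s' ^+ 2 + d ^+ 2) (addr_ge0 (sqr_ge0 _) (sqr_ge0 _)).
have [B0 B2] := sqf (s ^+ 2 + d ^+ 2) (addr_ge0 (sqr_ge0 _) (sqr_ge0 _)).
have hA := Sge s' d; have hB := Sge s d.
have := ler_norm (- s'); have := ler_norm (- s); rewrite !normrN.
move: A0 A2 B0 B2 hA hB.
set A := Num.sqrt _; set B := Num.sqrt _ => A0 A2 B0 B2 hA hB h1 h2.
nra.
Qed.

Lemma sqrt_convex (a b d t : R) : 0 <= t <= 1 ->
  Num.sqrt ((t * a + (1 - t) * b) ^+ 2 + d ^+ 2) <=
  t * Num.sqrt (a ^+ 2 + d ^+ 2) + (1 - t) * Num.sqrt (b ^+ 2 + d ^+ 2).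
Proof.
move=> /andP[t0 t1].
have ha : 0 <= a ^+ 2 + d ^+ 2 by rewrite addr_ge0 // sqr_ge0.
have hb : 0 <= b ^+ 2 + d ^+ 2 by rewrite addr_ge0 // sqr_ge0.
have [A0 A2] := @sqf _ ha; have [B0 B2] := @sqf _ hb.
have hAB : a * b + d ^+ 2 <= Num.sqrt (a ^+ 2 + d ^+ 2) * Num.sqrt (b ^+ 2 + d ^+ 2).
  rewrite -sqrtrM // (le_trans (ler_norm _)) // -sqrtr_sqr ler_sqrt ?mulr_ge0 //.
  have : 0 <= d ^+ 2 * (a - b) ^+ 2 by rewrite mulr_ge0 // sqr_ge0.
  nra.
move: A0 A2 B0 B2 hAB; set A := Num.sqrt _; set B := Num.sqrt _ => A0 A2 B0 B2 hAB.
have R0 : 0 <= t * A + (1 - t) * B by rewrite addr_ge0 // mulr_ge0 // subr_ge0.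
rewrite -[X in _ <= X]ger0_norm // -sqrtr_sqr ler_sqrt ?sqr_ge0 //.
have : 0 <= t * (1 - t) by rewrite mulr_ge0 // subr_ge0.
nra.
Qed.

Lemma tf_convex (Rr d : R) : convex_nonneg (tf Rr d).
Proof.
move=> x y t _ _ ht; rewrite /tf.
have -> : Rr - (t * x + (1 - t) * y) = t * (Rr - x) + (1 - t) * (Rr - y) by ring.
have := @sqrt_convex (Rr - x) (Rr - y) d t ht.
lra.
Qed.

Lemma dtf_bound (Rr d x : R) : 0 < d -> `|dtf Rr d x| <= 2.
Proof.
move=> d0; rewrite /dtf.
have hS : 0 < Num.sqrt ((Rr - x) ^+ 2 + d ^+ 2).
  by rewrite sqrtr_gt0; apply: ltr_wpDl; [exact: sqr_ge0 | exact: exprn_gt0].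
have h1 : `|(Rr - x) / Num.sqrt ((Rr - x) ^+ 2 + d ^+ 2)| <= 1.
  by rewrite normrM normfV (gtr0_norm hS) ler_pdivrMr // mul1r Sge.
rewrite (le_trans (ler_normB _ _)) // normrN1; lra.
Qed.

Lemma is_derive_cont (f : R -> R) (x df : R) : is_derive x (1:R) f df -> {for x, continuous f}.
Proof.
move=> h; apply: differentiable_continuous; apply/derivable1_diffP; exact: ex_derive.
Qed.

Lemma dtf_cont (Rr d : R) : 0 < d -> continuous (dtf Rr d).
Proof.
move=> d0 x.
have hl : is_derive x (1:R) (cst Rr - id) (0 - 1) by apply: is_deriveB.
have hg : is_derive x (1:R) (fun y => (Rr - y) ^+ 2 + d ^+ 2) (- (2 * (Rr - x))).
  have h2 := @is_deriveX _ _ (cst Rr - id) 2 x 1 _ hl.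
  have h3 := @is_deriveD _ _ _ ((cst Rr - id) ^+ 2) (cst (d ^+ 2)) x 1 _ _ h2 (is_derive_cst _ _ _).
  move: h3 => /is_derive_eq h3; apply: h3.
  by rewrite /= addr0 expr1 sub0r [_ *: _]mulrN1.
have gx : 0 < (Rr - x) ^+ 2 + d ^+ 2 by apply: ltr_wpDl; [exact: sqr_ge0 | exact: exprn_gt0].
have hs := @is_derive_sqrt_comp _ _ _ hg gx.
have cS := @is_derive_cont _ _ _ hs.
have cl := @is_derive_cont _ _ _ hl.
have sx : Num.sqrt ((Rr - x) ^+ 2 + d ^+ 2) != 0 by rewrite lt0r_neq0 // sqrtr_gt0.
have cV := @continuousV _ _ (fun y : R => Num.sqrt ((Rr - y) ^+ 2 + d ^+ 2)) x sx cS.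
have cM := continuousM cl cV.
have cc : {for x, continuous (cst (-1) : R -> R)} by exact: cst_continuous.
exact: (continuousB cc cM).
Qed.
End S2.
Section S3.
Variable R : realType.
Local Open Scope ereal_scope.

Lemma int_le_cst (mu : {finite_measure set R -> \bar R}) (f : R -> R) (D : set R) (c : R) :
  measurable D -> continuous f -> (forall x, D x -> 0 <= f x <= c)%R ->
  \int[mu]_(x in D) (f x)%:E <= c%:E * mu D.
Proof.
move=> mD cf hf.
have mf : measurable_fun D (EFin \o f).
  apply/measurable_EFinP; apply: measurable_funS (continuous_measurable_fun cf) => //.
rewrite -integral_cst //; apply: ge0_le_integral => //.
- by move=> x Dx; rewrite lee_fin; case/andP: (hf x Dx).
- by move=> x Dx; rewrite lee_fin; case/andP: (hf x Dx).
Qed.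

Lemma int_ge_cst (mu : {finite_measure set R -> \bar R}) (f : R -> R) (D : set R) (c : R) :
  measurable D -> continuous f -> (0 <= c)%R -> (forall x, D x -> c <= f x)%R ->
  c%:E * mu D <= \int[mu]_(x in D) (f x)%:E.
Proof.
move=> mD cf c0 hf.
have mf : measurable_fun D (EFin \o f).
  apply/measurable_EFinP; apply: measurable_funS (continuous_measurable_fun cf) => //.
rewrite -integral_cst //; apply: ge0_le_integral => //.

Qed.

Lemma int_upper (mu : {finite_measure set R -> \bar R}) (f : R -> R) (Rr c : R) :
  (0 <= Rr)%R -> (0 <= c)%R -> continuous f -> (forall x, 0 <= x -> 0 <= f x)%R ->
  (forall x, 0 <= x -> x <= Rr -> f x <= 1)%R -> (forall x, Rr < x -> f x <= c)%R ->
  \int[mu]_(x in [set` `[0%R, +oo[%R]) (f x)%:E <=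
    mu [set` `[0%R, Rr]%R] + c%:E * mu [set` `]Rr, +oo[%R].
Proof.
move=> R0 c0 cf f0 f1 fc.
have mf : measurable_fun setT (EFin \o f).
  by apply/measurable_EFinP; exact: continuous_measurable_fun.
rewrite (@itv_bndbnd_setU _ _ _ (BRight Rr)) ?bnd_simp //.
have dj : [disjoint [set` `[0%R, Rr]%R] & [set` `]Rr, +oo[%R]].
  rewrite disj_set2E; apply/eqP; rewrite -subset0 => t [/=]; rewrite !in_itv /= => /andP[_ h1] /andP[h2 _].
  by move: (lt_le_trans h2 h1); rewrite ltxx.
have fp : forall x, ([set` `[0%R, Rr]%R] `|` [set` `]Rr, +oo[%R]) x -> 0 <= (f x)%:E.
  move=> x hx; rewrite lee_fin; apply: f0.
  case: hx => /=; rewrite in_itv /= ?andbT; [by case/andP|].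
  by move=> h; apply: (le_trans R0 (ltW h)).
rewrite (ge0_integral_setU _ (measurable_itv _) (measurable_itv _) _ fp dj); last first.
  exact: measurable_funS mf.
apply: leeD.
  rewrite -[X in _ <= X]mul1e; apply: int_le_cst => //.
  move=> x /=; rewrite in_itv /= => /andP[h1 h2]; rewrite f0 //= f1 //.
apply: int_le_cst => //.
move=> x /=; rewrite in_itv /= andbT => h1; rewrite fc // andbT f0 //.
exact: (le_trans R0 (ltW h1)).
Qed.

Lemma int_lower (mu : {finite_measure set R -> \bar R}) (f : R -> R) (b c : R) :
  (0 <= c)%R -> continuous f -> (forall x, 0 <= x -> 0 <= f x)%R ->
  (forall x, 0 <= x -> x <= b -> c <= f x)%R ->
  c%:E * mu [set` `[0%R, b]%R] <= \int[mu]_(x in [set` `[0%R, +oo[%R]) (f x)%:E.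
Proof.
move=> c0 cf f0 fc.
apply: (le_trans (int_ge_cst mu f [set` `[0%R, b]%R] c (measurable_itv _) cf c0 _)).
  by move=> x /=; rewrite in_itv /= => /andP[h1 h2]; exact: fc.
apply: ge0_subset_integral => //; try exact: measurable_itv.
- apply/measurable_EFinP; apply: measurable_funS (continuous_measurable_fun cf) => //.
- by move=> x /=; rewrite in_itv /= andbT => h; rewrite lee_fin f0.
- by move=> x /=; rewrite !in_itv /= andbT => /andP[].
Qed.

Lemma int_fin (mu : {finite_measure set R -> \bar R}) (f : R -> R) (M : R) :
  continuous f -> (forall x, 0 <= x -> 0 <= f x <= M)%R ->
  \int[mu]_(x in [set` `[0%R, +oo[%R]) (f x)%:E \is a fin_num.
Proof.
move=> cf fM.
have h1 : \int[mu]_(x in [set` `[0%R, +oo[%R]) (f x)%:E <= M%:E * mu [set` `[0%R, +oo[%R].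
  apply: int_le_cst => // x /=; rewrite in_itv /= andbT; exact: fM.
have h0 : 0 <= \int[mu]_(x in [set` `[0%R, +oo[%R]) (f x)%:E.
  apply: integral_ge0 => x /=; rewrite in_itv /= andbT lee_fin => hx; by case/andP: (fM x hx).
have hm : mu [set` `[0%R, +oo[%R] \is a fin_num by apply: fin_num_measure; exact: measurable_itv.
rewrite ge0_fin_numE //; apply: (le_lt_trans h1).
by rewrite -(fineK hm) -EFinM ltry.
Qed.
End S3.
Section S4.
Variable R : realType.

Lemma Lam_ge0 (phi : R -> R) (x y : R) : convex_nonneg phi -> 0 < x -> 0 < y ->
  0 <= Lam phi x y.
Proof.
move=> cv x0 y0; rewrite /Lam.
wlog yx : x y x0 y0 / y <= x.
  move=> H; case: (leP y x) => h.
    by have := H x y x0 y0 h; rewrite (max_l h).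
  have := H y x y0 x0 (ltW h); rewrite (max_l (ltW h)) (addrC y x) (distrC y x) //.
have xy0 : 0 <= x - y by rewrite subr_ge0.
rewrite (max_l yx) (ger0_norm xy0).
have := cv (x + y) (x - y) (1/2) ltac:(lra) ltac:(lra) ltac:(apply/andP; split; lra).
have -> : 1 / 2 * (x + y) + (1 - 1 / 2) * (x - y) = x by field.
lra.
Qed.

Lemma Q32_ge0 (phi : R -> R) (mu : {finite_measure set R -> \bar R}) :
  convex_nonneg phi -> (0 <= Q32 phi mu)%E.
Proof.
move=> cv; rewrite /Q32; apply: integral_ge0 => z [z1 z2]; rewrite lee_fin.
apply: divr_ge0; first exact: Lam_ge0.
exact: sqrtr_ge0.
Qed.

Lemma ac_mono (f : R -> R) (N : set R) :
  loc_abs_cont_nonneg f -> measurable N -> (@lebesgue_measure R) N = 0%E ->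
  (forall x, 0 < x -> ~ N x -> derivable f x 1 /\ 0 <= derive1 f x) ->
  forall a b, 0 <= a -> a <= b -> f a <= f b.
Proof.
move=> ac mN N0 good a b a0 ab.
apply/ler_addgt0Pr => e e0.
have hb : 0 < b - a + 1 by lra.
have := @ac_mono_aux R f N ac mN N0 good a b (e / (b - a + 1)) a0 ab (divr_gt0 e0 hb).
by rewrite divfK ?lt0r_neq0 //; lra.
Qed.

Definition phiD (Rr d x : R) := (tf R Rr d 0)^-1 * tf R Rr d x.


Lemma K_bounds (Rr d : R) : 0 < Rr -> 0 < d -> 2 * Rr <= tf R Rr d 0 <= 2 * Rr + d.
Proof.
move=> R0 d0; apply/andP; split.
  by have := tf_ge2 R Rr d 0; rewrite subr0.
have := tf_le R Rr d 0 (ltW d0); rewrite subr0 ger0_norm; [lra | exact: ltW].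
Qed.

Lemma phiD_test (Rr d : R) : 0 < Rr -> 0 < d -> test_fun (phiD Rr d).
Proof.
move=> R0 d0.
have /andP[K1 K2] := K_bounds Rr d R0 d0.
set K := tf R Rr d 0 in K1 K2.
have K0 : 0 < K by lra.
have k0 : 0 < K^-1 by rewrite invr_gt0.
rewrite /phiD -/K; split; [|split; [|split]].
- by move=> x _; rewrite mulr_ge0 // ?tf_ge0 // ltW.
- move=> x y t x0 y0 ht.
  have := tf_convex R Rr d x y t x0 y0 ht.
  move=> h.
  have -> : t * (K^-1 * tf R Rr d x) + (1 - t) * (K^-1 * tf R Rr d y) =
    K^-1 * (t * tf R Rr d x + (1 - t) * tf R Rr d y) by ring.
  by rewrite ler_pM2l.
- by move=> x y _ xy; rewrite ler_pM2l // tf_mono.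
split.
  exists 1 => x x0; rewrite ger0_norm ?mulr_ge0 ?tf_ge0 //; last exact: ltW.
  by rewrite ler_pdivrMl // mulr1 /K tf_mono.
split.
  apply: continuous_subspaceT => x.
  have hd := @is_deriveZ _ _ _ (tf R Rr d) (K^-1) x 1 _ (tf_derive R Rr d x d0).
  exact: (@is_derive_cont R _ _ _ hd).
exists (fun x => K^-1 * dtf R Rr d x); split; [|split].
- apply: continuous_subspaceT => x.
  have := continuousM (@cst_continuous _ _ (K^-1) x) (dtf_cont R Rr d d0 x).
  exact.
- exists (K^-1 * 2) => x _; rewrite normrM (gtr0_norm k0) ler_pM2l //.
  exact: dtf_bound.
- move=> x _.
  exact: (@is_deriveZ _ _ _ (tf R Rr d) (K^-1) x 1 _ (tf_derive R Rr d x d0)).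
Qed.

Lemma final_real (Rr th a b c : R) : 0 < Rr -> 0 < 1 - th -> 0 <= a -> 0 <= b -> 0 <= c ->
  (forall d, 0 < d -> 2 * (1 - th) * Rr / (2 * Rr + d) * c <= a + d / (2 * Rr) * b) ->
  (1 - th) * c <= a.
Proof.
move=> R0 t0 a0 b0 c0 key.
rewrite leNgt; apply/negP => H.
set g := (1 - th) * c - a.
have g0 : 0 < g by rewrite /g subr_gt0.
set M := a + b + b / (2 * Rr) + 1.
have u0 : 0 <= b / (2 * Rr) by rewrite divr_ge0 // mulr_ge0 // ltW.
have M0 : 1 <= M by rewrite /M; lra.
set d := Num.min 1 (Rr * g / M).
have q0 : 0 < Rr * g / M by rewrite divr_gt0 ?mulr_gt0 //; lra.
have d0 : 0 < d by rewrite /d lt_min ltr01 q0.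
have d1 : d <= 1 by rewrite /d ge_min lexx.
have dM : d * M <= Rr * g.
  have : d <= Rr * g / M by rewrite /d ge_min lexx orbT.
  by rewrite ler_pdivlMr //; lra.
have := key d d0.
have e1 : 2 * (1 - th) * Rr / (2 * Rr + d) * (2 * Rr + d) = 2 * (1 - th) * Rr.
  by rewrite divfK // gt_eqF //; lra.
have e2 : d / (2 * Rr) * (2 * Rr) = d by rewrite divfK // gt_eqF //; lra.
have e3 : b / (2 * Rr) * (2 * Rr) = b by rewrite divfK // gt_eqF //; lra.
move: e1 e2 e3 u0; set p := 2 * (1 - th) * Rr / (2 * Rr + d); set q := d / (2 * Rr);
  set u := b / (2 * Rr) => e1 e2 e3 u0 hk.
have hq : q * b = d * u by rewrite /q /u; ring.
have h1 : p * c * (2 * Rr + d) <= (a + q * b) * (2 * Rr + d).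
  by rewrite ler_pM2r //; lra.
have h2 : (a + q * b) * (2 * Rr + d) = 2 * Rr * a + d * a + d * b + d * d * u.
  have e4 : d * u * (2 * Rr) = d * b by rewrite -mulrA e3.
  rewrite hq; nra.
have h3 : p * c * (2 * Rr + d) = 2 * (1 - th) * Rr * c by rewrite mulrAC e1.
have : 0 <= d * u * (1 - d) by apply: mulr_ge0; [apply: mulr_ge0; lra | lra].
move=> hdu.
have dM' : d * (a + b + u + 1) <= Rr * ((1 - th) * c - a) by exact: dM.
have g0' : 0 < (1 - th) * c - a by exact: g0.
clear -dM' g0' hdu h1 h2 h3 R0 d0.
nra.
Qed.
Lemma phiD_cont (Rr d : R) : 0 < d -> continuous (phiD Rr d).
Proof.
move=> d0 x.
have hd := @is_deriveZ _ _ _ (tf R Rr d) ((tf R Rr d 0)^-1) x 1 _ (tf_derive R Rr d x d0).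
exact: (@is_derive_cont R _ _ _ hd).
Qed.

Lemma phiD_est (Rr d th x : R) : 0 < Rr -> 0 < d -> 0 <= x ->
  [/\ 0 <= phiD Rr d x, (x <= Rr -> phiD Rr d x <= 1),
      (Rr < x -> phiD Rr d x <= d / (2 * Rr)) &
      (0 < th < 1 -> x <= th * Rr -> 2 * (1 - th) * Rr / (2 * Rr + d) <= phiD Rr d x)].
Proof.
move=> R0 d0 x0.
have /andP[K1 K2] := K_bounds Rr d R0 d0.
rewrite /phiD; set K := tf R Rr d 0 in K1 K2 *.
have K0 : 0 < K by lra.
have k0 : 0 < K^-1 by rewrite invr_gt0.
have T0 := tf_ge0 R Rr d x.
split.
- by rewrite mulr_ge0 // ltW.
- by move=> _; rewrite ler_pdivrMl // mulr1 /K tf_mono.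
- move=> xR.
  have T1 : tf R Rr d x <= d.
    have := tf_le R Rr d x (ltW d0); rewrite ler0_norm; [lra | lra].
  have kinv : K^-1 <= (2 * Rr)^-1 by rewrite lef_pV2 ?posrE //; lra.
  rewrite mulrC; nra.
- move=> /andP[t0 t1] xt.
  have T1 : 2 * (1 - th) * Rr <= tf R Rr d x.
    have := tf_ge2 R Rr d x; nra.
  have kinv : (2 * Rr + d)^-1 <= K^-1 by rewrite lef_pV2 ?posrE //; lra.
  have : 0 < (2 * Rr + d)^-1 by rewrite invr_gt0; lra.
  have : 0 <= 2 * (1 - th) * Rr by apply: mulr_ge0; lra.
  nra.
Qed.
End S4.

Theorem mainTheorem11 (R : realType) (h : R -> {finite_measure set R -> \bar R}) :
  super_solution h ->
  forall (Rr theta tau0 tau : R), 0 < Rr -> 0 < theta < 1 ->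
    0 <= tau0 -> tau0 <= tau ->
    (h tau [set` `[0, Rr]%R] >= (1 - theta)%:E * h tau0 [set` `[0, theta * Rr]%R])%E.
Proof.
move=> [_ Hs] Rr th t0 t R0 th01 t00 t0t.
have /andP[th0 th1] := th01.
have fA : h t [set` `[0, Rr]%R] \is a fin_num by apply: fin_num_measure; exact: measurable_itv.
have fB : h t [set` `]Rr, +oo[%R] \is a fin_num by apply: fin_num_measure; exact: measurable_itv.
have fC : h t0 [set` `[0, th * Rr]%R] \is a fin_num by apply: fin_num_measure; exact: measurable_itv.
have key : forall d, 0 < d ->
    2 * (1 - th) * Rr / (2 * Rr + d) * fine (h t0 [set` `[0, th * Rr]%R]) <=
    fine (h t [set` `[0, Rr]%R]) + d / (2 * Rr) * fine (h t [set` `]Rr, +oo[%R]).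
  move=> d d0.
  have tfd := phiD_test R Rr d R0 d0.
  have [acf aef] := Hs _ tfd.
  case: aef => N /= [mN N0 sub].
  have good : forall x, 0 < x -> ~ N x -> derivable (moment h (phiD R Rr d)) x 1 /\
      0 <= derive1 (moment h (phiD R Rr d)) x.
    move=> x x0 nx.
    have : (0 < x -> derivable (moment h (phiD R Rr d)) x 1 /\
      (Q32 (phiD R Rr d) (h x) <= (derive1 (moment h (phiD R Rr d)) x)%:E)%E).
      by apply: contrapT => hx; apply: nx; apply: sub.
    move=> /(_ x0) [dx hq]; split => //.
    have := Q32_ge0 R (phiD R Rr d) (h x) (tfd.2.1).
    by move=> /le_trans /(_ hq); rewrite lee_fin.
  have mono := ac_mono R (moment h (phiD R Rr d)) N acf mN N0 good t0 t t00 t0t.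
  have cphi := phiD_cont R Rr d d0.
  have est := fun x x0 => phiD_est R Rr d th x R0 d0 x0.
  have /andP[K1 K2] := K_bounds R Rr d R0 d0.
  have bnd : forall x, 0 <= x -> 0 <= phiD R Rr d x <= 1.
    move=> x x0; have [e0 _ _ _] := est x x0; rewrite e0 /=.
    rewrite /phiD ler_pdivrMl ?mulr1 ?tf_mono //; lra.
  have f0 : forall x, 0 <= x -> 0 <= phiD R Rr d x by move=> x x0; case/andP: (bnd x x0).
  have I1 := int_fin R (h t) (phiD R Rr d) 1 cphi bnd.
  have I0 := int_fin R (h t0) (phiD R Rr d) 1 cphi bnd.
  have c2 : 0 <= d / (2 * Rr) by rewrite divr_ge0 // ?mulr_ge0 // ltW.
  have c3 : 0 <= 2 * (1 - th) * Rr / (2 * Rr + d).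
    rewrite divr_ge0 //; [apply: mulr_ge0; lra | lra].
  have e1 : forall x, 0 <= x -> x <= Rr -> phiD R Rr d x <= 1.
    by move=> x x0; case: (est x x0).
  have e2 : forall x, Rr < x -> phiD R Rr d x <= d / (2 * Rr).
    by move=> x xR; case: (est x (le_trans (ltW R0) (ltW xR))) => _ _ H _; exact: H.
  have e3 : forall x, 0 <= x -> x <= th * Rr -> 2 * (1 - th) * Rr / (2 * Rr + d) <= phiD R Rr d x.
    by move=> x x0; case: (est x x0) => _ _ _ H; exact: H.
  have up := int_upper R (h t) (phiD R Rr d) Rr (d / (2 * Rr)) (ltW R0) c2 cphi f0 e1 e2.
  have lo := int_lower R (h t0) (phiD R Rr d) (th * Rr) _ c3 cphi f0 e3.
  have mE : ((moment h (phiD R Rr d) t0)%:E <= (moment h (phiD R Rr d) t)%:E)%E by rewrite lee_fin.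
  rewrite /moment (fineK I1) (fineK I0) in mE.
  have := le_trans lo (le_trans mE up).
  by rewrite -(fineK fA) -(fineK fB) -(fineK fC) -!EFinM -EFinD lee_fin.
rewrite -(fineK fA) -(fineK fC) -EFinM lee_fin.
apply: (final_real R Rr th _ _ _ R0 _ _ _ _ key); first lra.
- by apply: fine_ge0; exact: measure_ge0.
- by apply: fine_ge0; exact: measure_ge0.
- by apply: fine_ge0; exact: measure_ge0.
Qed.
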